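(* Let $R$ be a weakly bleached local ring and let $s=\sum_{i=1}^{\infty}s_ix^i\in R[[x]]$ be central in $R[[x]]$ with $s\in J\big(R[[x]]\big)$. Let $s_0$ denote the constant term of $s$. For $A(x)\in M_2\big(R[[x]];s\big)$ the following are equivalent: (1) $A(x)$ is strongly $J$-clean in $M_2\big(R[[x]];s\big)$; (2) $A(0)$ is strongly $J$-clean in $M_2(R;s_0)$.
   Context: All rings are associative with identity. A ring $R$ is local if $R/J(R)$ is a division ring, where $J(R)$ is the Jacobson radical. A local ring $R$ is weakly bleached if for any $a\in J(R)$ and any $b\in 1+J(R)$ the additive maps $R\to R$, $r\mapsto br-ra$ and $r\mapsto ar-rb$, are both surjective. $R[[x]]$ is the formal power series ring; for a matrix $A(x)$ over $R[[x]]$, $A(0)$ is obtained by taking constant terms of all entries. For a ring $T$ and a central element $s\in T$, $M_2(T;s)$ denotes the ring whose elements are the $2\times 2$ arrays $\left[\begin{smallmatrix} a&b\\ c&d\end{smallmatrix}\right]$ with $a,b,c,d\in T$, with componentwise addition and multiplication $\left[\begin{smallmatrix} a&b\\ c&d\end{smallmatrix}\right]\left[\begin{smallmatrix} a'&b'\\ c'&d'\end{smallmatrix}\right]=\left[\begin{smallmatrix} aa'+s^2bc'&ab'+bd'\\ ca'+dc'&s^2cb'+dd'\end{smallmatrix}\right]$. An element $a$ of a ring $T$ is strongly $J$-clean if there is an idempotent $e\in T$ with $ae=ea$ and $a-e\in J(T)$. *)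

(* Defs.v *)
From mathcomp Require Import all_boot all_algebra.
Set Implicit Arguments. Unset Strict Implicit. Unset Printing Implicit Defensive.
Import GRing.Theory.
Local Open Scope ring_scope.

Section RingOps.
Variable T : Type.
Variables (one : T) (sub mul : T -> T -> T).

Definition is_unit_ops (x : T) := exists y, mul x y = one /\ mul y x = one.
Definition in_jac_ops (x : T) := forall r, is_unit_ops (sub one (mul r x)).
Definition central_ops (x : T) := forall r, mul x r = mul r x.
Definition idempotent_ops (e : T) := mul e e = e.
Definition strongly_J_clean_ops (a : T) :=
  exists e, [/\ idempotent_ops e, mul a e = mul e a & in_jac_ops (sub a e)].
End RingOps.

Definition rsub (R : pzRingType) (a b : R) := a - b.
Definition in_jac (R : pzRingType) (x : R) := in_jac_ops 1 (@rsub R) *%R x.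

(* R local: R/J(R) is a division ring, i.e. 1 is not in J(R) (the quotient is
   nonzero) and every element outside J(R) is invertible modulo J(R). *)
Definition local_ring (R : pzRingType) :=
  ~ in_jac (1 : R) /\
  forall a : R, ~ in_jac a ->
    exists b : R, in_jac (a * b - 1) /\ in_jac (b * a - 1).

Definition weakly_bleached (R : pzRingType) :=
  local_ring R /\
  forall a b : R, in_jac a -> in_jac (b - 1) ->
    (forall y : R, exists r : R, b * r - r * a = y) /\
    (forall y : R, exists r : R, a * r - r * b = y).

Definition pseries (R : Type) := nat -> R.
Section PSeries.
Variable R : pzRingType.
Definition ps_one : pseries R := fun n => (n == 0)%:R.
Definition ps_zero : pseries R := fun _ => 0.
Definition ps_add (f g : pseries R) : pseries R := fun n => f n + g n.
Definition ps_sub (f g : pseries R) : pseries R := fun n => f n - g n.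
Definition ps_mul (f g : pseries R) : pseries R :=
  fun n => \sum_(i < n.+1) f i * g (n - i)%N.
Definition ps_in_jac (f : pseries R) := in_jac_ops ps_one ps_sub ps_mul f.
Definition ps_central (f : pseries R) := central_ops ps_mul f.
End PSeries.

Record mx2 (T : Type) := Mx2 { m11 : T; m12 : T; m21 : T; m22 : T }.
Definition mx2_map (T U : Type) (f : T -> U) (A : mx2 T) : mx2 U :=
  Mx2 (f (m11 A)) (f (m12 A)) (f (m21 A)) (f (m22 A)).

Section M2.
Variable T : Type.
Variables (zero one : T) (add sub mul : T -> T -> T).
Definition mx2_one : mx2 T := Mx2 one zero zero one.
Definition mx2_sub (A B : mx2 T) : mx2 T :=
  Mx2 (sub (m11 A) (m11 B)) (sub (m12 A) (m12 B))
      (sub (m21 A) (m21 B)) (sub (m22 A) (m22 B)).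
Definition mx2_mul (s : T) (A B : mx2 T) : mx2 T :=
  Mx2 (add (mul (m11 A) (m11 B)) (mul (mul s s) (mul (m12 A) (m21 B))))
      (add (mul (m11 A) (m12 B)) (mul (m12 A) (m22 B)))
      (add (mul (m21 A) (m11 B)) (mul (m22 A) (m21 B)))
      (add (mul (mul s s) (mul (m21 A) (m12 B))) (mul (m22 A) (m22 B))).
Definition mx2_sJclean (s : T) (A : mx2 T) :=
  strongly_J_clean_ops mx2_one mx2_sub (mx2_mul s) A.
End M2.

Definition sJclean_M2 (R : pzRingType) (s : R) (A : mx2 R) :=
  mx2_sJclean 0 1 +%R (@rsub R) *%R s A.
Definition sJclean_M2_ps (R : pzRingType) (s : pseries R) (A : mx2 (pseries R)) :=
  mx2_sJclean (@ps_zero R) (@ps_one R) (@ps_add R) (@ps_sub R) (@ps_mul R) s A.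

(* Main.v *)
Require Import Defs.
From HB Require Import structures.
From mathcomp Require Import all_boot all_algebra.
From mathcomp Require Import boolp.
From mathcomp Require Import zify.
From Stdlib Require Import Classical FunctionalExtensionality.
Set Implicit Arguments. Unset Strict Implicit. Unset Printing Implicit Defensive.
Import GRing.Theory.
Local Open Scope ring_scope.

Section Jac.
Variable T : pzRingType.
Definition unt (x : T) := is_unit_ops 1 *%R x.

Lemma untM (x y : T) : unt x -> unt y -> unt (x * y).
Proof.
move=> [x' [h1 h2]] [y' [h3 h4]]; exists (y' * x'); split.
  by rewrite mulrA -(mulrA x) h3 mulr1.
by rewrite mulrA -(mulrA y') h2 mulr1.
Qed.

Lemma unt_swap (a b : T) : unt (1 - a * b) -> unt (1 - b * a).
Proof.
move=> [u [h1 h2]]; exists (1 + b * u * a); split.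
  rewrite mulrDr mulr1 mulrBl mul1r.
  have ->: b*u*a - b*a*(b*u*a) = b*((1 - a*b)*u)*a.
    by rewrite mulrBl mul1r mulrBr mulrBl !mulrA.
  by rewrite h1 mulr1 subrK.
have key: b*u*a*(b*a) = b*u*a - b*a.
  have e: b*a = b*(u*(1 - a*b))*a by rewrite h2 mulr1.
  rewrite [X in _ - X]e mulrBr mulr1 mulrBr mulrBl !mulrA.
  by rewrite opprB addrC subrK.
rewrite mulrBr mulr1 mulrDl mul1r key [b*a + _]addrC subrK addrK.
by [].
Qed.

Lemma jacE (x : T) : in_jac x <-> forall r, unt (1 - r * x).
Proof. by []. Qed.

Lemma unt1 : unt 1. Proof. by exists 1; rewrite mulr1. Qed.

Lemma jac0 : in_jac (0 : T).
Proof. by apply/jacE => r; rewrite mulr0 subr0; apply: unt1. Qed.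

Lemma jacMl (t x : T) : in_jac x -> in_jac (t * x).
Proof. by move/jacE=> h; apply/jacE=> r; rewrite mulrA. Qed.

Lemma jacMr (t x : T) : in_jac x -> in_jac (x * t).
Proof.
move/jacE=> h; apply/jacE=> r; rewrite mulrA; apply: unt_swap.
by rewrite mulrA; apply: h.
Qed.

Lemma jacN (x : T) : in_jac x -> in_jac (- x).
Proof. by move/jacE=> h; apply/jacE=> r; rewrite mulrN -mulNr. Qed.

Lemma jacD (x y : T) : in_jac x -> in_jac y -> in_jac (x + y).
Proof.
move=> /jacE hx /jacE hy; apply/jacE=> r.
have [v [h1 h2]] := hx r.
have ->: 1 - r * (x + y) = (1 - r * x) * (1 - v * r * y).
  rewrite mulrBr mulr1 !mulrA h1 mul1r mulrDr opprD addrA //.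
by apply: untM; [apply: hx | apply: hy].
Qed.

Lemma jacB (x y : T) : in_jac x -> in_jac y -> in_jac (x - y).
Proof. by move=> hx hy; apply: jacD => //; apply: jacN. Qed.

Lemma jac_unt (j : T) : in_jac j -> unt (1 + j).
Proof. by move/jacE=> h; have := h (-1); rewrite mulN1r opprK. Qed.

Lemma jac_unt' (x : T) : in_jac (x - 1) -> unt x.
Proof. by move/jac_unt; rewrite addrC subrK. Qed.

Lemma unt_inv_jac (x y : T) : in_jac (x - 1) -> y * x = 1 -> in_jac (y - 1).
Proof.
move=> hx hyx; have ->: y - 1 = - (y * (x - 1)) by rewrite mulrBr mulr1 hyx opprB.
by apply/jacN/jacMl.
Qed.

End Jac.

Lemma local_idem (T : pzRingType) (e : T) : local_ring T -> in_jac (e * e - e) ->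
  in_jac e \/ in_jac (e - 1).
Proof.
move=> [_ hloc] he; case: (classic (in_jac e)) => [h|h]; [by left|right].
have [b [_ hb]] := hloc e h.
have ->: e - 1 = b * (e * e - e) - (b * e - 1) * (e - 1).
  rewrite !mulrBr !mulrBl ?mulrA ?mul1r ?mulr1.
  by rewrite opprD opprK opprB addrACA addKr (addrC (b*e*e)) subrK.
by apply: jacB => //; [apply: jacMl | apply: jacMr].
Qed.


Record central_elt (T : pzRingType) := CE { ce_val : T; ce_c : forall r, ce_val * r = r * ce_val }.

Definition M2 (T : pzRingType) (cs : central_elt T) := mx2 T.

Section M2ring.
Variables (T : pzRingType) (cs : central_elt T).
Local Notation s := (ce_val cs).
Local Notation M := (M2 cs).

Lemma mx2E (A B : mx2 T) : m11 A = m11 B -> m12 A = m12 B -> m21 A = m21 B -> m22 A = m22 B -> A = B.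
Proof. by case: A; case: B => /= ? ? ? ? ? ? ? ? -> -> -> ->. Qed.

Lemma ssC (x : T) : s * s * x = x * (s * s).
Proof. by rewrite -mulrA (ce_c cs x) mulrA (ce_c cs x) -mulrA. Qed.
Lemma ssL (x y : T) : x * (s * s * y) = s * s * (x * y).
Proof. by rewrite mulrA -ssC mulrA. Qed.

HB.instance Definition _ := gen_eqMixin M.
HB.instance Definition _ := gen_choiceMixin M.

Definition m2zero : M := Mx2 0 0 0 0.
Definition m2add (A B : M) : M := Mx2 (m11 A + m11 B) (m12 A + m12 B) (m21 A + m21 B) (m22 A + m22 B).
Definition m2opp (A : M) : M := Mx2 (- m11 A) (- m12 A) (- m21 A) (- m22 A).

Lemma m2addA : associative m2add.
Proof. by move=> A B C; apply: mx2E => /=; rewrite addrA. Qed.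
Lemma m2addC : commutative m2add.
Proof. by move=> A B; apply: mx2E => /=; rewrite addrC. Qed.
Lemma m2add0 : left_id m2zero m2add.
Proof. by move=> A; apply: mx2E => /=; rewrite add0r. Qed.
Lemma m2addN : left_inverse m2zero m2opp m2add.
Proof. by move=> A; apply: mx2E => /=; rewrite addNr. Qed.

HB.instance Definition _ := GRing.isZmodule.Build M m2addA m2addC m2add0 m2addN.

Definition m2one : M := mx2_one 0 1.
Definition m2mul (A B : M) : M := mx2_mul +%R *%R s A B.

Lemma m2mulA : associative m2mul.
Proof.
move=> [a b c d] [a' b' c' d'] [a'' b'' c'' d'']; apply: mx2E => /=;
rewrite !mulrDl !mulrDr !ssL !mulrA; by rewrite addrACA.
Qed.
Lemma m2mul1 : left_id m2one m2mul.
Proof. by move=> [a b c d]; apply: mx2E => /=; rewrite !mul1r !mul0r ?mulr0 ?addr0 ?add0r. Qed.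
Lemma m2mulr1 : right_id m2one m2mul.
Proof. by move=> [a b c d]; apply: mx2E => /=; rewrite !mulr1 !mulr0 ?mulr0 ?addr0 ?add0r. Qed.
Lemma m2mulDl : left_distributive m2mul m2add.
Proof.
move=> [a b c d] [a' b' c' d'] [a'' b'' c'' d'']; apply: mx2E => /=;
by rewrite ?mulrDl ?mulrDr addrACA.
Qed.
Lemma m2mulDr : right_distributive m2mul m2add.
Proof.
move=> [a b c d] [a' b' c' d'] [a'' b'' c'' d'']; apply: mx2E => /=;
by rewrite ?mulrDl ?mulrDr addrACA.
Qed.

HB.instance Definition _ := GRing.Zmodule_isPzRing.Build M m2mulA m2mul1 m2mulr1 m2mulDl m2mulDr.

Lemma sJclean_M2E (A : mx2 T) : sJclean_M2 s A <-> strongly_J_clean_ops (1 : M) (@rsub M) *%R A.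
Proof. by []. Qed.

Lemma m2mulE (A B : M) : A * B = Mx2 (m11 A * m11 B + s * s * (m12 A * m21 B))
  (m11 A * m12 B + m12 A * m22 B) (m21 A * m11 B + m22 A * m21 B)
  (s * s * (m21 A * m12 B) + m22 A * m22 B).
Proof. by []. Qed.
Lemma m2subE (A B : M) : A - B = Mx2 (m11 A - m11 B) (m12 A - m12 B) (m21 A - m21 B) (m22 A - m22 B).
Proof. by []. Qed.
Lemma m2addE (A B : M) : A + B = Mx2 (m11 A + m11 B) (m12 A + m12 B) (m21 A + m21 B) (m22 A + m22 B).
Proof. by []. Qed.
Lemma m2oneE : (1 : M) = Mx2 1 0 0 1.
Proof. by []. Qed.
Lemma m2zeroE : (0 : M) = Mx2 0 0 0 0.
Proof. by []. Qed.

Lemma jacM2_diag (X : M) : in_jac X -> in_jac (m11 X) /\ in_jac (m22 X).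
Proof.
case: X => x11 x12 x21 x22 /jacE hX /=; split; apply/jacE => r.
  have [Y [h1 h2]] := hX (Mx2 r 0 0 0 : M).
  case: Y h1 h2 => y11 y12 y21 y22.
  rewrite !m2mulE !m2subE m2oneE /= !mul0r !mulr0 ?addr0 ?add0r ?subr0 ?sub0r.
  move=> h1 h2.
  have e21 := congr1 (@m21 T) h1; have e11 := congr1 (@m11 T) h1.
  have f11 := congr1 (@m11 T) h2.
  move: e21 e11 f11 => /=; rewrite ?(mul0r, mulr0, addr0, add0r, subr0, sub0r, oppr0, mul1r, mulN1r) => -> .
  rewrite ?(mul0r, mulr0, addr0, add0r, oppr0, mulrN, mulNr, subr0) => e11 f11.
  by exists y11.
have [Y [h1 h2]] := hX (Mx2 0 0 0 r : M).
case: Y h1 h2 => y11 y12 y21 y22.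
rewrite !m2mulE !m2subE m2oneE /= !mul0r !mulr0 ?addr0 ?add0r ?subr0 ?sub0r.
move=> h1 h2.
have e12 := congr1 (@m12 T) h1; have e22 := congr1 (@m22 T) h1.
have f22 := congr1 (@m22 T) h2.
move: e12 e22 f22 => /=; rewrite ?(mul0r, mulr0, addr0, add0r, subr0, sub0r, oppr0, mul1r, mulN1r) => -> .
rewrite ?(mul0r, mulr0, addr0, add0r, oppr0, mulrN, mulNr, subr0) => e22 f22.
by exists y22.
Qed.

Hypothesis sJ : in_jac s.
Lemma ssJ : in_jac (s * s). Proof. exact: jacMr. Qed.

Lemma Kleft (Y k : M) : in_jac (m11 k) -> in_jac (m22 k) ->
  in_jac (m11 (Y * k)) /\ in_jac (m22 (Y * k)).
Proof.
move=> h1 h2; rewrite m2mulE /=; split.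
  by apply: jacD; [apply: jacMl | apply: jacMr; apply: ssJ].
by apply: jacD; [apply: jacMr; apply: ssJ | apply: jacMl].
Qed.

Lemma K1_leftinv (X : M) : in_jac (m11 X - 1) -> in_jac (m22 X - 1) ->
  exists Y : M, Y * X = 1.
Proof.
case: X => al be ga de /= ha hd.
have [al' [ha1 ha2]] := jac_unt' ha.
pose De := de - s * s * (ga * (al' * be)).
have hD : in_jac (De - 1).
  have ->: De - 1 = (de - 1) - s * s * (ga * (al' * be)).
    by rewrite /De addrAC.
  by apply: jacB => //; apply: jacMr; apply: ssJ.
have [De' [hd1 hd2]] := jac_unt' hD.
exists (Mx2 (al' + s*s*(al'*be*De'*ga*al')) (-(al'*be*De')) (-(De'*ga*al')) De').
have ede: de = De + s*s*(ga*(al'*be)) by rewrite /De subrK.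
rewrite m2mulE m2oneE /=; apply: mx2E => /=.
- rewrite mulrDl ha2 !mulNr !mulrN -!mulrA ha2 mulr1.
  by rewrite -addrA subrr addr0.
- rewrite mulNr -[al'*be*De'*de]mulrA ede mulrDr hd2 ssL mulrDr mulr1 ssL.
  rewrite mulrDl !mulrA.
  by rewrite opprD addrACA !subrr addr0.
- by rewrite mulNr -mulrA ha2 mulr1 addNr.
- rewrite ede mulrDr hd2 ssL mulNr mulrN !mulrA.
  by rewrite addrCA addNr addr0.
Qed.


Lemma K1_unit (X : M) : in_jac (m11 X - 1) -> in_jac (m22 X - 1) -> unt X.
Proof.
move=> h1 h2; have [Y hY] := K1_leftinv h1 h2.
have eY : Y - 1 = - (Y * (X - 1)) by rewrite mulrBr mulr1 hY opprB.
have [k1 k2] : in_jac (m11 (Y * (X - 1))) /\ in_jac (m22 (Y * (X - 1))).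
  by apply: Kleft; rewrite m2subE /=.
have hY1 : in_jac (m11 Y - 1) by move: (congr1 (@m11 T) eY); rewrite m2subE /= => ->; apply: jacN.
have hY2 : in_jac (m22 Y - 1) by move: (congr1 (@m22 T) eY); rewrite m2subE /= => ->; apply: jacN.
have [Z hZ] := K1_leftinv hY1 hY2.
have eZ : Z = X by rewrite -[Z]mulr1 -hY mulrA hZ mul1r.
by exists Y; split => //; rewrite -eZ.
Qed.

Lemma diag_jacM2 (X : M) : in_jac (m11 X) -> in_jac (m22 X) -> in_jac X.
Proof.
move=> h1 h2; apply/jacE => Rr.
have [k1 k2] := Kleft Rr h1 h2.
apply: K1_unit; rewrite m2subE m2oneE /= addrC addKr; exact: jacN.
Qed.

Lemma nec_diag (A : mx2 T) : local_ring T -> sJclean_M2 s A ->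
  (in_jac (m11 A) \/ in_jac (m11 A - 1)) /\ (in_jac (m22 A) \/ in_jac (m22 A - 1)).
Proof.
move=> hloc /sJclean_M2E [E [hEE _ hJ]].
have [j1 j2] := jacM2_diag hJ.
move: j1 j2; rewrite /rsub m2subE /= => j1 j2.
have e1 := congr1 (@m11 T) hEE; have e2 := congr1 (@m22 T) hEE.
move: e1 e2; rewrite /idempotent_ops m2mulE /= => e1 e2.
have i1 : in_jac (m11 E * m11 E - m11 E).
  have ->: m11 E * m11 E - m11 E = - (s * s * (m12 E * m21 E)).
    by rewrite -{3}e1 opprD addrA subrr add0r.
  by apply/jacN/jacMr/ssJ.
have i2 : in_jac (m22 E * m22 E - m22 E).
  have ->: m22 E * m22 E - m22 E = - (s * s * (m21 E * m12 E)).
    by rewrite -{3}e2 opprD addrCA subrr addr0.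
  by apply/jacN/jacMr/ssJ.
split.
  case: (local_idem hloc i1) => h; [left|right].
    by rewrite -(subrK (m11 E) (m11 A)); apply: jacD.
  by rewrite -(subrK (m11 E) (m11 A)) -addrA; apply: jacD.
case: (local_idem hloc i2) => h; [left|right].
  by rewrite -(subrK (m22 E) (m22 A)); apply: jacD.
by rewrite -(subrK (m22 E) (m22 A)) -addrA; apply: jacD.
Qed.

Lemma suff_JJ (A : mx2 T) : in_jac (m11 A) -> in_jac (m22 A) -> sJclean_M2 s A.
Proof.
move=> h1 h2; apply/sJclean_M2E; exists (0 : M); split.
- by rewrite /idempotent_ops mul0r.
- by rewrite mul0r mulr0.
- by rewrite /rsub subr0; apply: diag_jacM2.
Qed.

Lemma suff_11 (A : mx2 T) : in_jac (m11 A - 1) -> in_jac (m22 A - 1) -> sJclean_M2 s A.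
Proof.
move=> h1 h2; apply/sJclean_M2E; exists (1 : M); split.
- by rewrite /idempotent_ops mul1r.
- by rewrite mul1r mulr1.
- by rewrite /rsub; apply: diag_jacM2; rewrite m2subE.
Qed.

Lemma suff_mixed (A : mx2 T) (p1 p2 : T) : p1 * p1 = p1 -> p2 * p2 = p2 ->
  (forall r, p1 * r = r * p1) -> (forall r, p2 * r = r * p2) ->
  in_jac (m11 A - p1) -> in_jac (m22 A - p2) ->
  (exists u, m11 A * u + m12 A = u * (s * s * (m21 A * u) + m22 A)) ->
  (exists v, m21 A + m22 A * v = v * (m11 A + s * s * (m12 A * v))) ->
  sJclean_M2 s A.
Proof.
case: A => a b c d /= hp1 hp2 cp1 cp2 h1 h2 [u hu] [v hv].
pose A : M := Mx2 a b c d.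
pose U : M := Mx2 1 u v 1.
pose D : M := Mx2 (a + s * s * (b * v)) 0 0 (s * s * (c * u) + d).
pose P : M := Mx2 p1 0 0 p2.
have [W [hUW hWU]] : unt U by apply: K1_unit; rewrite /= subrr; apply: jac0.
have hAU : A * U = U * D.
  rewrite !m2mulE /=; apply: mx2E => /=; rewrite ?(mulr1, mul1r, mulr0, mul0r, addr0, add0r) //.
have hWA : W * A = D * W by rewrite -[W * A]mulr1 -hUW mulrA -(mulrA W) hAU mulrA hWU mul1r.
have hDP : D * P = P * D.
  rewrite !m2mulE /=; apply: mx2E => /=; rewrite ?(mulr1, mul1r, mulr0, mul0r, addr0, add0r) //.
have hPP : P * P = P.
  rewrite !m2mulE /=; apply: mx2E => /=; rewrite ?(mulr1, mul1r, mulr0, mul0r, addr0, add0r) //.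
apply/sJclean_M2E; exists (U * P * W); split.
- rewrite /idempotent_ops -!mulrA (mulrA W U) hWU mul1r (mulrA P P) hPP //.
- rewrite !mulrA hAU -(mulrA U D) hDP mulrA -!mulrA hWA //.
- rewrite /rsub.
  have ->: A - U * P * W = (A - P) + (P * U - U * P) * W.
    by rewrite mulrBl -(mulrA P U W) hUW mulr1 addrA subrK.
  apply: jacD; first by apply: diag_jacM2; rewrite m2subE.
  apply: jacMr; apply: diag_jacM2; rewrite m2subE !m2mulE /=;
    rewrite ?(mulr1, mul1r, mulr0, mul0r, addr0, add0r, subrr); exact: jac0.
Qed.

End M2ring.


Definition PS (R : pzRingType) := pseries R.

Section PSring.
Variable R : pzRingType.
Local Notation P := (PS R).

HB.instance Definition _ := gen_eqMixin P.
HB.instance Definition _ := gen_choiceMixin P.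

Definition ps_opp (f : P) : P := fun n => - f n.

Lemma psE (f g : P) : (forall n, f n = g n) -> f = g.
Proof. by move=> h; apply: functional_extensionality. Qed.

Lemma ps_addA : associative (@ps_add R).
Proof. by move=> f g h; apply: psE => n; rewrite /ps_add addrA. Qed.
Lemma ps_addC : commutative (@ps_add R).
Proof. by move=> f g; apply: psE => n; rewrite /ps_add addrC. Qed.
Lemma ps_add0 : left_id (@ps_zero R) (@ps_add R).
Proof. by move=> f; apply: psE => n; rewrite /ps_add /ps_zero add0r. Qed.
Lemma ps_addN : left_inverse (@ps_zero R) ps_opp (@ps_add R).
Proof. by move=> f; apply: psE => n; rewrite /ps_add /ps_zero /ps_opp addNr. Qed.

HB.instance Definition _ := GRing.isZmodule.Build P ps_addA ps_addC ps_add0 ps_addN.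

Lemma ps_mulA : associative (@ps_mul R).
Proof.
move=> f g h; apply: psE => n; rewrite /ps_mul /=.
symmetry.
under eq_bigr do rewrite mulr_suml.
under [RHS]eq_bigr do rewrite mulr_sumr.
transitivity (\sum_(k < n.+1) \sum_(i < n.+1 | (i < k.+1)%N) f i * g (k - i)%N * h (n - k)%N).
  apply: eq_bigr => k _; rewrite (big_ord_widen n.+1 (fun i : nat => f i * g (k - i)%N * h (n - k)%N)) //.
rewrite (exchange_big_dep predT) //=.
apply: eq_bigr => i _; symmetry.
transitivity (\sum_(0 <= j < n.+1 - i) (fun k => f i * g (k - i)%N * h (n - k)%N) (j + i)%N).
  rewrite subSn; last by rewrite -ltnS.
  rewrite big_mkord; apply: eq_bigr => j _ /=.
  by rewrite addnK -mulrA subnDA subnAC.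
rewrite -(big_addn 0 n.+1 i predT (fun k => f i * g (k - i)%N * h (n - k)%N)) add0n big_geq_mkord.
by apply: eq_bigl => k /=.
Qed.

Lemma ps_mul1 : left_id (@ps_one R) (@ps_mul R).
Proof.
move=> f; apply: psE => n; rewrite /ps_mul /ps_one big_ord_recl /= mul1r subn0.
by rewrite big1 ?addr0 // => i _; rewrite mul0r.
Qed.
Lemma ps_mulr1 : right_id (@ps_one R) (@ps_mul R).
Proof.
move=> f; apply: psE => n; rewrite /ps_mul /ps_one big_ord_recr /= subnn mulr1.
rewrite big1 ?add0r // => i _ /=.
by rewrite subn_eq0 leqNgt ltn_ord /= mulr0.
Qed.
Lemma ps_mulDl : left_distributive (@ps_mul R) (@ps_add R).
Proof.
move=> f g h; apply: psE => n; rewrite /ps_mul /ps_add -big_split /=.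
by apply: eq_bigr => i _; rewrite mulrDl.
Qed.
Lemma ps_mulDr : right_distributive (@ps_mul R) (@ps_add R).
Proof.
move=> f g h; apply: psE => n; rewrite /ps_mul /ps_add -big_split /=.
by apply: eq_bigr => i _; rewrite mulrDr.
Qed.

HB.instance Definition _ := GRing.Zmodule_isPzRing.Build P ps_mulA ps_mul1 ps_mulr1 ps_mulDl ps_mulDr.

Lemma psmulE (f g : P) n : (f * g) n = \sum_(i < n.+1) f i * g (n - i)%N.
Proof. by []. Qed.
Lemma psaddE (f g : P) n : (f + g) n = f n + g n. Proof. by []. Qed.
Lemma psoppE (f : P) n : (- f) n = - f n. Proof. by []. Qed.
Lemma pssubE (f g : P) n : (f - g) n = f n - g n. Proof. by []. Qed.
Lemma psoneE n : (1 : P) n = (n == 0)%:R. Proof. by []. Qed.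
Lemma pszeroE n : (0 : P) n = 0. Proof. by []. Qed.
Lemma psmul0 (f g : P) : (f * g) 0%N = f 0%N * g 0%N.
Proof. by rewrite psmulE big_ord1. Qed.

Lemma psmul_recr (f g : P) n : (f * g) n = f n * g 0%N + \sum_(i < n) f i * g (n - i)%N.
Proof. by rewrite psmulE big_ord_recr /= subnn addrC. Qed.
Lemma psmul_recl (f g : P) n : (f * g) n = f 0%N * g n + \sum_(i < n) f i.+1 * g (n - i.+1)%N.
Proof. by rewrite psmulE big_ord_recl /= subn0. Qed.

Definition agree (n : nat) (g h : P) := forall i, (i < n)%N -> g i = h i.

Lemma agree_mull (c g h : P) n : agree n g h -> agree n (c * g) (c * h).
Proof.
move=> hg i hi; rewrite !psmulE; apply: eq_bigr => k _; congr (_ * _).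
by apply: hg; apply: leq_ltn_trans (leq_subr _ _) hi.
Qed.
Lemma agree_mulr (c g h : P) n : agree n g h -> agree n (g * c) (h * c).
Proof.
move=> hg i hi; rewrite !psmulE; apply: eq_bigr => k _; congr (_ * _).
by apply: hg; apply: leq_ltn_trans hi; rewrite -ltnS.
Qed.
Lemma agree_mul0 (c g h : P) n : c 0%N = 0 -> agree n g h -> agree n.+1 (c * g) (c * h).
Proof.
move=> hc hg i hi; rewrite !psmul_recl hc !mul0r !add0r; apply: eq_bigr => k _; congr (_ * _).
apply: hg; have := ltn_ord k; lia.
Qed.

Lemma rec_solve (L : R -> R) (rest : P -> nat -> R) (b : P) :
  (forall y, exists r, L r = y) ->
  (forall g h n, agree n g h -> rest g n = rest h n) ->
  exists u : P, forall n, L (u n) + rest u n = b n.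
Proof.
move=> hsurj hloc; have [pick hpick] := choice hsurj.
pose F (g : P) : P := fun n => pick (b n - rest g n).
pose v := fix v k := if k is k'.+1 then F (v k') else (0 : P).
have Q : forall i k m, (i < k)%N -> (k <= m)%N -> v m i = v k i.
  elim/ltn_ind => i IH [|k] [|m] //= hik hkm.
  rewrite /F (hloc (v m) (v k) i) // => j hj.
  by apply: IH => //; lia.
exists (fun i => v i.+1 i) => i /=.
rewrite hpick (hloc _ (v i) i) ?subrK // => j hj /=.
by rewrite (Q j j.+1 i) //; lia.
Qed.

Lemma ps_unit (f : P) : unt (f 0%N) -> unt f.
Proof.
move=> [f0' [h1 h2]].
have s1 : forall y, exists r, f 0%N * r = y.
  by move=> y; exists (f0' * y); rewrite mulrA h1 mul1r.
have l1 : forall g h n, agree n g h -> (fun (g : P) (n : nat) => \sum_(i < n) f i.+1 * g (n - i.+1)%N) g n =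
   (fun (g : P) (n : nat) => \sum_(i < n) f i.+1 * g (n - i.+1)%N) h n.
  move=> g h n hgh; apply: eq_bigr => i _; congr (_ * _); apply: hgh.
  have := ltn_ord i; lia.
have [g hg] := rec_solve 1 s1 l1.
have hfg : f * g = 1 by apply: psE => n; rewrite psmul_recl hg.
have s2 : forall y, exists r, r * f 0%N = y.
  by move=> y; exists (y * f0'); rewrite -mulrA h2 mulr1.
have l2 : forall g h n, agree n g h -> (fun (g : P) (n : nat) => \sum_(i < n) g i * f (n - i)%N) g n =
   (fun (g : P) (n : nat) => \sum_(i < n) g i * f (n - i)%N) h n.
  by move=> g1 g2 n hgh; apply: eq_bigr => i _; rewrite hgh.
have [k hk] := rec_solve 1 s2 l2.
have hkf : k * f = 1 by apply: psE => n; rewrite psmul_recr hk.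
have ekg : k = g by rewrite -[k]mulr1 -hfg mulrA hkf mul1r.
by exists g; split => //; rewrite -ekg.
Qed.

Lemma ps_jac (f : P) : in_jac (f 0%N) -> in_jac f.
Proof.
move/jacE=> h; apply/jacE => r; apply: ps_unit.
by rewrite pssubE psoneE psmul0 /=; apply: h.
Qed.

Lemma riccati (s p q m rhs : P) : s 0%N = 0 ->
  (forall y, exists r, r * p 0%N - q 0%N * r = y) ->
  exists u : P, u * p - q * u + u * (s * s * (m * u)) = rhs.
Proof.
move=> hs hsurj.
pose rest (g : P) (n : nat) := (\sum_(i < n) g i * p (n - i)%N) -
   (\sum_(i < n) q i.+1 * g (n - i.+1)%N) + (g * (s * s * (m * g))) n.
have hW0 : forall g : P, (s * s * (m * g)) 0%N = 0 by move=> g; rewrite !psmul0 hs !mul0r.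
have hloc : forall g h n, agree n g h -> rest g n = rest h n.
  move=> g h n hgh; rewrite /rest; congr (_ - _ + _).
  - by apply: eq_bigr => i _; rewrite hgh.
  - apply: eq_bigr => i _; rewrite hgh //; have := ltn_ord i; lia.
  rewrite (psmul_recr g) (psmul_recr h) !hW0 !mulr0 !add0r; apply: eq_bigr => i _.
  have hss : (s * s) 0%N = 0 by rewrite psmul0 hs mul0r.
  have ag := agree_mul0 hss (agree_mull m hgh).
  rewrite hgh //; congr (_ * _); apply: ag.
  by rewrite ltnS leq_subr.
have [u hu] := rec_solve rhs hsurj hloc.
exists u; apply: psE => n; rewrite -hu /rest psaddE pssubE (psmul_recr u p) (psmul_recl q u).
by rewrite opprD addrACA -[LHS]addrA.
Qed.

End PSring.


Lemma surj_neg (T : pzRingType) (x z : T) :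
  (forall y, exists r, x * r - r * z = y) -> forall y, exists r, r * z - x * r = y.
Proof. by move=> h y; have [r hr] := h (- y); exists r; rewrite -opprB hr opprK. Qed.

Section Ev.
Variables (R : pzRingType) (cs : central_elt (PS R)) (cs0 : central_elt R).
Hypothesis hcs : ce_val cs 0%N = ce_val cs0.
Definition ev (X : M2 cs) : M2 cs0 := mx2_map (fun f : PS R => f 0%N) X.
Definition cst (x : R) : PS R := fun n => if n is 0%N then x else 0.
Definition lift (X : M2 cs0) : M2 cs := mx2_map cst X.

Lemma evM X Y : ev (X * Y) = ev X * ev Y.
Proof.
rewrite /ev !m2mulE; apply: mx2E => /=; by rewrite ?psaddE !psmul0 ?hcs.
Qed.
Lemma evB X Y : ev (X - Y) = ev X - ev Y.
Proof. by []. Qed.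
Lemma ev1 : ev 1 = 1.
Proof. by []. Qed.
Lemma ev_lift X : ev (lift X) = X.
Proof. by case: X. Qed.
Lemma ev_unt X : unt X -> unt (ev X).
Proof. by move=> [Y [h1 h2]]; exists (ev Y); rewrite -!evM h1 h2. Qed.
Lemma ev_jac X : in_jac X -> in_jac (ev X).
Proof.
move/jacE=> h; apply/jacE => r.
by rewrite -(ev_lift r) -evM -ev1 -evB; apply: ev_unt.
Qed.
End Ev.

Theorem theorem2p18 (R : pzRingType) (s : pseries R) (A : mx2 (pseries R)) :
  weakly_bleached R ->
  ps_central s ->
  ps_in_jac s ->
  s 0%N = 0 ->
  (sJclean_M2_ps s A <-> sJclean_M2 (s 0%N) (mx2_map (fun f : pseries R => f 0%N) A)).
Proof.
move=> [hloc hwb] hcent hjac hs0.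
pose cs : central_elt (PS R) := @CE (PS R) s hcent.
have c0 : forall r : R, s 0%N * r = r * s 0%N by move=> r; rewrite hs0 mul0r mulr0.
pose cs0 : central_elt R := CE c0.
have hcs : ce_val cs 0%N = ce_val cs0 by [].
change (sJclean_M2 (ce_val cs) (A : mx2 (PS R)) <-> sJclean_M2 (ce_val cs0) (@ev R cs cs0 A)).
split.
  move/sJclean_M2E => [E [hEE hAE hJ]]; apply/sJclean_M2E.
  exists (@ev R cs cs0 E); split.
  - by rewrite /idempotent_ops -evM // hEE.
  - by rewrite -!evM // hAE.
  - by rewrite /rsub -evB; apply: ev_jac.
have sJ0 : in_jac (ce_val cs0) by rewrite /= hs0; apply: jac0.
have sJ : in_jac (ce_val cs) by [].
move=> /(nec_diag sJ0 hloc) [ha hd].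
have L1 : forall f : PS R, in_jac (f 0%N) -> in_jac f := @ps_jac R.
have L2 : forall f : PS R, in_jac (f 0%N - 1) -> in_jac (f - 1).
  by move=> f h; apply: ps_jac; rewrite pssubE psoneE.
have RU : forall a b c d : PS R, (forall y, exists r, r * d 0%N - a 0%N * r = y) ->
    exists u, a * u + b = u * (ce_val cs * ce_val cs * (c * u) + d).
  move=> a b c d hsurj; have [u hu] := riccati (p:=d) (q:=a) c b hs0 hsurj.
  exists u; rewrite -hu mulrDr (addrC (u * d - a * u)) addrCA.
  by rewrite [a * u + _]addrCA subrr addr0.
have RV : forall a b c d : PS R, (forall y, exists r, r * a 0%N - d 0%N * r = y) ->
    exists v, c + d * v = v * (a + ce_val cs * ce_val cs * (b * v)).
  move=> a b c d hsurj; have [v hv] := riccati (p:=a) (q:=d) b c hs0 hsurj.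
  by exists v; rewrite -hv mulrDr addrAC subrK.
case: A ha hd => a b c d /= ha hd.
case: ha => ha; case: hd => hd.
- by apply: (suff_JJ sJ); apply: L1.
- apply: (@suff_mixed _ cs sJ (Mx2 a b c d) 0 1) => //=.
  + by rewrite mul0r.
  + by rewrite mul1r.
  + by move=> r; rewrite mul0r mulr0.
  + by move=> r; rewrite mul1r mulr1.
  + by rewrite subr0; apply: L1.
  + by apply: L2.
  + by apply: RU; apply: surj_neg; apply: (hwb _ _ ha hd).2.
  + by apply: RV; apply: surj_neg; apply: (hwb _ _ ha hd).1.
- apply: (@suff_mixed _ cs sJ (Mx2 a b c d) 1 0) => //=.
  + by rewrite mul1r.
  + by rewrite mul0r.
  + by move=> r; rewrite mul1r mulr1.
  + by move=> r; rewrite mul0r mulr0.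
  + by apply: L2.
  + by rewrite subr0; apply: L1.
  + by apply: RU; apply: surj_neg; apply: (hwb _ _ hd ha).1.
  + by apply: RV; apply: surj_neg; apply: (hwb _ _ hd ha).2.
- by apply: (suff_11 sJ); apply: L2.
Qed.
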